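(* With the notation of the context, suppose $A=1$. Then every $\alpha$-communal $k$-tuple can be written in exactly one way as a nonnegative integer linear combination $\sum_{i=1}^k c_i\mathbf{x}_i$ with $c_i\in\mathbb{Z}_{\ge 0}$; that is, $\mathbf{x}_1,\dots,\mathbf{x}_k$ freely generate the monoid of $\alpha$-communal $k$-tuples.
   Context: Let $k\ge 2$ and let $\alpha_1,\dots,\alpha_k$ be nonnegative rational numbers such that the sum of any $k-1$ of them is at most $1$ and $\sum_i\alpha_i>1$. A $k$-tuple $[g_1,\dots,g_k]$ of integers is called $\alpha$-communal if $0\le g_i\le \alpha_i\sum_{j=1}^k g_j$ for every $i$. Write $\alpha_i=m_i/n_i$ in lowest terms with $n_i\ge 1$. Set $N=\prod_{i=1}^k n_i$, $A=N(\sum_{i=1}^k\alpha_i-1)$, and $\hat\alpha_i=1-\sum_{j\ne i}\alpha_j$. For each $i$ define $\mathbf{x}_i=\frac{N}{n_i}[\alpha_1,\dots,\alpha_{i-1},\hat\alpha_i,\alpha_{i+1},\dots,\alpha_k]$, i.e. the $k$-tuple whose $j$-th entry is $\frac{N}{n_i}\alpha_j$ for $j\ne i$ and whose $i$-th entry is $\frac{N}{n_i}\hat\alpha_i$. *)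

(* Defs.v *)
From HB Require Import structures.
From mathcomp Require Import all_boot all_order all_algebra.
Set Implicit Arguments. Unset Strict Implicit. Unset Printing Implicit Defensive.
Import Order.TTheory GRing.Theory Num.Theory.
Local Open Scope ring_scope.

Definition communal (k : nat) (alpha : 'I_k -> rat) (g : 'I_k -> int) : Prop :=
  forall i : 'I_k, 0 <= g i /\ (g i)%:~R <= alpha i * (\sum_(j < k) g j)%:~R.

Definition den_i (k : nat) (alpha : 'I_k -> rat) (i : 'I_k) : rat :=
  (denq (alpha i))%:~R.

Definition bigN (k : nat) (alpha : 'I_k -> rat) : rat :=
  \prod_(i < k) den_i alpha i.

Definition bigA (k : nat) (alpha : 'I_k -> rat) : rat :=
  bigN alpha * (\sum_(i < k) alpha i - 1).

Definition alpha_hat (k : nat) (alpha : 'I_k -> rat) (i : 'I_k) : rat :=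
  1 - \sum_(j < k | j != i) alpha j.

Definition xvec (k : nat) (alpha : 'I_k -> rat) (i j : 'I_k) : rat :=
  bigN alpha / den_i alpha i * (if j == i then alpha_hat alpha i else alpha j).

(* Main.v *)
Require Import Defs.
From HB Require Import structures.
From mathcomp Require Import all_boot all_order all_algebra.
From mathcomp Require Import ring lra.
Import Order.TTheory GRing.Theory Num.Theory.
Local Open Scope ring_scope.

Lemma den_gt0 k (alpha : 'I_k -> rat) i : 0 < den_i alpha i.
Proof. by rewrite /den_i ltr0z denq_gt0. Qed.

Lemma den_neq0 k (alpha : 'I_k -> rat) i : den_i alpha i != 0.
Proof. by rewrite gt_eqF // den_gt0. Qed.

Lemma alden_int k (alpha : 'I_k -> rat) i : alpha i * den_i alpha i \is a Num.int.
Proof. by rewrite /den_i -numqE intr_int. Qed.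

Lemma den_int k (alpha : 'I_k -> rat) i : den_i alpha i \is a Num.int.
Proof. exact: intr_int. Qed.

Lemma q_def k (alpha : 'I_k -> rat) i :
  bigN alpha / den_i alpha i = \prod_(j < k | j != i) den_i alpha j.
Proof. by rewrite /bigN (bigD1 i) //= mulrAC divff ?mul1r // den_neq0. Qed.

Lemma q_ge0 k (alpha : 'I_k -> rat) i : 0 <= bigN alpha / den_i alpha i.
Proof.
rewrite q_def; apply: prodr_ge0 => j _; exact: ltW (den_gt0 _ _ _).
Qed.

Lemma qal_int k (alpha : 'I_k -> rat) i l : l != i ->
  bigN alpha / den_i alpha i * alpha l \is a Num.int.
Proof.
move=> hl; rewrite q_def (bigD1 l) //= mulrAC.
apply: rpredM; first by rewrite mulrC alden_int.
by apply: rpred_prod => m _; exact: den_int.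
Qed.

Lemma xint k (alpha : 'I_k -> rat) i j : xvec alpha i j \is a Num.int.
Proof.
rewrite /xvec; case: eqP => [_|/eqP hj]; last exact: qal_int.
rewrite /alpha_hat mulrBr mulr1 mulr_sumr; apply: rpredB.
  by rewrite q_def; apply: rpred_prod => m _; exact: den_int.
by apply: rpred_sum => l hl; exact: qal_int.
Qed.

Lemma xsum k (alpha : 'I_k -> rat) i :
  \sum_(l < k) xvec alpha i l = bigN alpha / den_i alpha i.
Proof.
rewrite /xvec -mulr_sumr (bigD1 i) //= eqxx.
rewrite (eq_bigr alpha) => [|l /negbTE -> //].
by rewrite /alpha_hat subrK mulr1.
Qed.

Lemma xvecE k (alpha : 'I_k -> rat) (hA : bigA alpha = 1) i j :
  xvec alpha i j = bigN alpha / den_i alpha i * alpha j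
                   - (j == i)%:R / den_i alpha i.
Proof.
rewrite /xvec; case: eqP => [->|_]; last by rewrite mul0r subr0.
have hS : \sum_(l < k) alpha l = alpha i + \sum_(l < k | l != i) alpha l.
  by rewrite (bigD1 i).
move: hA; rewrite /bigA hS /alpha_hat => hA.
have h : 1 / den_i alpha i = bigN alpha / den_i alpha i *
   (alpha i + \sum_(l < k | l != i) alpha l - 1).
  by rewrite mulrAC hA.
rewrite h; ring.
Qed.

Lemma combE k (alpha : 'I_k -> rat) (hA : bigA alpha = 1) (f : 'I_k -> rat) j :
  \sum_(i < k) f i * xvec alpha i j =
  alpha j * \sum_(i < k) f i * (bigN alpha / den_i alpha i) - f j / den_i alpha j.
Proof.
under eq_bigr => i _ do rewrite xvecE // mulrBr.
rewrite sumrB mulr_sumr; congr (_ - _).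
  by apply: eq_bigr => i _; ring.
rewrite (bigD1 j) //= eqxx big1 ?addr0; first by rewrite mul1r.
by move=> l; rewrite eq_sym => /negbTE ->; rewrite mul0r mulr0.
Qed.

Theorem mainTheorem6 (k : nat) (alpha : 'I_k -> rat)
  (hk : (2 <= k)%N)
  (hnn : forall i, 0 <= alpha i)
  (hsub : forall i0 : 'I_k, \sum_(j < k | j != i0) alpha j <= 1)
  (hsum : 1 < \sum_(i < k) alpha i)
  (hA : bigA alpha = 1) :
  (* each x_i is an alpha-communal integer k-tuple *)
  (forall i : 'I_k, exists y : 'I_k -> int,
      communal alpha y /\ forall j, (y j)%:~R = xvec alpha i j) /\
  (* every alpha-communal k-tuple is a unique N-combination of the x_i *)
  (forall g : 'I_k -> int, communal alpha g ->
     (exists c : 'I_k -> nat,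
        forall j, (g j)%:~R = \sum_(i < k) (c i)%:R * xvec alpha i j) /\
     (forall c c' : 'I_k -> nat,
        (forall j, (g j)%:~R = \sum_(i < k) (c i)%:R * xvec alpha i j) ->
        (forall j, (g j)%:~R = \sum_(i < k) (c' i)%:R * xvec alpha i j) ->
        forall i, c i = c' i)).
Proof.
have hA' : bigN alpha * (\sum_(i < k) alpha i - 1) = 1 by [].
split.
  move=> i; exists (fun j => Num.Def.floor (xvec alpha i j)).
  have yE j : (Num.Def.floor (xvec alpha i j))%:~R = xvec alpha i j.
    by apply/eqP; rewrite -intrEfloor xint.
  split => // j; split.
    rewrite -(ler0z rat) yE /xvec; apply: mulr_ge0; first exact: q_ge0.
    by case: eqP => _ //; rewrite /alpha_hat subr_ge0.
  rewrite rmorph_sum /=.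
  under eq_bigr => l _ do rewrite yE.
  rewrite xsum yE xvecE // mulrC lerBlDr lerDl.
  by apply: divr_ge0; [exact: ler0n | exact: ltW (den_gt0 _ _ _)].
move=> g hg.
set s : rat := (\sum_(j < k) g j)%:~R.
set S := \sum_(i < k) alpha i.
pose d j := alpha j * s - (g j)%:~R.
pose r j := den_i alpha j * d j.
have rnat j : r j \is a Num.nat.
  rewrite natrEint; apply/andP; split.
    rewrite /r /d mulrBr mulrCA mulrA; apply: rpredB.
      by apply: rpredM; [exact: alden_int | exact: intr_int].
    by apply: rpredM; [exact: den_int | exact: intr_int].
  apply: mulr_ge0; first exact: ltW (den_gt0 _ _ _).
  by rewrite /d subr_ge0; case: (hg j).
have key (c : 'I_k -> nat) :
    (forall j, (g j)%:~R = \sum_(i < k) (c i)%:R * xvec alpha i j) ->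
    forall j, (c j)%:R = r j.
  move=> H j.
  have hT : s = \sum_(i < k) (c i)%:R * (bigN alpha / den_i alpha i).
    rewrite /s rmorph_sum /=.
    under eq_bigr => l _ do rewrite H.
    rewrite exchange_big /=; apply: eq_bigr => i _.
    by rewrite -mulr_sumr xsum.
  have := H j; rewrite combE // -hT /r /d => ->.
  by field; rewrite den_neq0.
split.
  exists (fun j => Num.Def.truncn (r j)).
  have cE j : (Num.Def.truncn (r j))%:R = r j.
    by apply/eqP; rewrite -natrEtruncn.
  move=> j.
  under eq_bigr => i _ do rewrite cE.
  rewrite combE //.
  have -> : \sum_(i < k) r i * (bigN alpha / den_i alpha i) = s.
    transitivity (bigN alpha * \sum_(i < k) d i).
      rewrite mulr_sumr; apply: eq_bigr => i _; rewrite /r.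
      by field; rewrite den_neq0.
    have -> : \sum_(i < k) d i = (S - 1) * s.
      rewrite /d sumrB -mulr_suml -/S /s rmorph_sum /=; ring.
    by rewrite mulrA hA' mul1r.
  by rewrite /r /d; field; rewrite den_neq0.
move=> c c' H H' i.
by apply/eqP; rewrite -(eqr_nat rat) key // key.
Qed.
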